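(* Let $X,Y,Z$ be finite random variables forming a Markov chain $X \leftrightarrow Y \leftrightarrow Z$. For $x\in\mathcal X$ let $[x]_{X,Y}$ and $[x]_{X,Z}$ denote the equivalence classes of $x$ under $p_{X,Y}$ and under $p_{X,Z}$, respectively. Then for every $x\in\mathcal X$ such that $p_{X,Z}(x,z)>0$ for some $z\in\mathcal Z$, we have $[x]_{X,Y}\subseteq [x]_{X,Z}$.
   Context: For finite random variables $X,Y$ with (w.l.o.g. disjoint) alphabets $\mathcal X,\mathcal Y$, the bipartite representation $\mathcal B_{X,Y}$ is the bipartite graph with vertex set $\mathcal X\cup\mathcal Y$ and an edge between $x\in\mathcal X$ and $y\in\mathcal Y$ iff $p(X=x)>0$ and $P(Y=y\mid X=x)>0$. The equivalence class $[x]_{X,Y}$ of $x\in\mathcal X$ is the set of $x'\in\mathcal X$ such that there is a path between $x$ and $x'$ in $\mathcal B_{X,Y}$. The classes $[x]_{X,Z}$ are defined analogously from $\mathcal B_{X,Z}$. *)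

(* Defs.v *)
(* Finite random variables X, Y, Z are given by their joint pmf
   P on the finite alphabets TX * TY * TZ (nonnegative, summing to 1). *)
From HB Require Import structures.
From mathcomp Require Import all_boot all_order all_algebra.
Set Implicit Arguments. Unset Strict Implicit. Unset Printing Implicit Defensive.
Import Order.TTheory GRing.Theory Num.Theory.
Local Open Scope ring_scope.

Section Defs.
Variables (R : realFieldType) (TX TY TZ : finType).

Definition is_pmf (P : {ffun TX * TY * TZ -> R}) : Prop :=
  (forall u, 0 <= P u) /\ \sum_u P u = 1.

Definition pX (P : {ffun TX * TY * TZ -> R}) (x : TX) : R :=
  \sum_(y : TY) \sum_(z : TZ) P (x, y, z).
Definition pY (P : {ffun TX * TY * TZ -> R}) (y : TY) : R :=
  \sum_(x : TX) \sum_(z : TZ) P (x, y, z).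
Definition pXY (P : {ffun TX * TY * TZ -> R}) (x : TX) (y : TY) : R :=
  \sum_(z : TZ) P (x, y, z).
Definition pXZ (P : {ffun TX * TY * TZ -> R}) (x : TX) (z : TZ) : R :=
  \sum_(y : TY) P (x, y, z).
Definition pYZ (P : {ffun TX * TY * TZ -> R}) (y : TY) (z : TZ) : R :=
  \sum_(x : TX) P (x, y, z).

(* X <-> Y <-> Z is a Markov chain: X and Z are conditionally independent
   given Y, i.e. p(x,y,z) p(y) = p(x,y) p(y,z) for all x, y, z. *)
Definition markov_chain (P : {ffun TX * TY * TZ -> R}) : Prop :=
  forall x y z, P (x, y, z) * pY P y = pXY P x y * pYZ P y z.
End Defs.

(* Bipartite representation B_{A,B} of a pair of random variables (A,B) with
   marginal pA and joint pAB: vertex set A + B (disjoint union), edge between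
   a and b iff p(A=a) > 0 and P(B=b | A=a) = pAB a b / pA a > 0.
   The relation is made symmetric (undirected graph). *)
Definition bip_edge (R : realFieldType) (TA TB : finType)
    (pA : TA -> R) (pAB : TA -> TB -> R) : rel (TA + TB) :=
  fun u v =>
    match u, v with
    | inl a, inr b => (0 < pA a) && (0 < pAB a b / pA a)
    | inr b, inl a => (0 < pA a) && (0 < pAB a b / pA a)
    | _, _ => false
    end.

Definition eq_class (R : realFieldType) (TA TB : finType)
    (pA : TA -> R) (pAB : TA -> TB -> R) (a : TA) : {set TA} :=
  [set a' | connect (bip_edge pA pAB) (inl a) (inl a')].

(* Main.v *)
Require Import Defs.
From mathcomp Require Import all_boot all_order all_algebra.
Import Order.TTheory GRing.Theory Num.Theory.
Local Open Scope ring_scope.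

Lemma sum_ge_term (R : realFieldType) (I : finType) (F : I -> R) (i : I) :
  (forall j, 0 <= F j) -> F i <= \sum_j F j.
Proof.
move=> H; rewrite (bigD1 i) //= lerDl; exact: sumr_ge0.
Qed.

Theorem lemma2 (R : realFieldType) (TX TY TZ : finType)
    (P : {ffun TX * TY * TZ -> R}) :
  is_pmf P -> markov_chain P ->
  forall x : TX, (exists z : TZ, 0 < pXZ P x z) ->
    eq_class (pX P) (pXY P) x \subset eq_class (pX P) (pXZ P) x.
Proof.
move=> [P0 _] HM x _.
have pXY0 : forall a b, 0 <= pXY P a b by move=> a b; apply: sumr_ge0.
have pXZ0 : forall a b, 0 <= pXZ P a b by move=> a b; apply: sumr_ge0.
have pYZ0 : forall a b, 0 <= pYZ P a b by move=> a b; apply: sumr_ge0.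
have pXle : forall a b, pXY P a b <= pX P a.
  by move=> a b; apply: sum_ge_term.
have pXle' : forall a c, pXZ P a c <= pX P a.
  move=> a c; rewrite /pX exchange_big /=; exact: sum_ge_term.
have pYle : forall a b, pXY P a b <= pY P b.
  move=> a b; rewrite /pY (bigD1 a) //= lerDl; apply: sumr_ge0 => i _; exact: pXY0.
have pYeq : forall b, pY P b = \sum_c pYZ P b c.
  by move=> b; rewrite /pY exchange_big.
have key : forall x1 x2 y, 0 < pXY P x1 y -> 0 < pXY P x2 y ->
    exists z, 0 < pXZ P x1 z /\ 0 < pXZ P x2 z.
  move=> x1 x2 y h1 h2.
  have hY : 0 < pY P y by apply: lt_le_trans h1 (pYle _ _).
  have [z hz] : exists z, 0 < pYZ P y z.
    case: (pickP (fun z => 0 < pYZ P y z)) => [z hz|H]; first by exists z.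
    exfalso; move: hY; rewrite pYeq ltNge; apply/negP/negPn.
    apply: sumr_le0 => c _; rewrite leNgt; apply/negP => hc.
    by move: (H c); rewrite /= hc.
  have pos : forall a, 0 < pXY P a y -> 0 < pXZ P a z.
    move=> a ha.
    have : 0 < P (a, y, z) * pY P y by rewrite HM; apply: mulr_gt0.
    rewrite pmulr_lgt0 // => hP.
    apply: lt_le_trans hP _.
    rewrite /pXZ (bigD1 y) //= lerDl; exact: sumr_ge0.
  by exists z; split; apply: pos.
pose e1 := bip_edge (pX P) (pXY P).
pose e2 := bip_edge (pX P) (pXZ P).
pose Inv (u : TX + TY) : Prop := match u with
  | inl a => is_true (connect e2 (inl x) (inl a))
  | inr b => exists2 a, connect e2 (inl x) (inl a) & 0 < pXY P a b end.
have edgeXY : forall a b, (0 < pX P a) && (0 < pXY P a b / pX P a) ->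
    0 < pXY P a b.
  move=> a b /andP[ha hb].
  by rewrite -(divfK (lt0r_neq0 ha) (pXY P a b)); apply: mulr_gt0.
have edgeXZ : forall a c, 0 < pXZ P a c -> e2 (inl a) (inr c) && e2 (inr c) (inl a).
  move=> a c h.
  have ha : 0 < pX P a by apply: lt_le_trans h (pXle' _ _).
  by rewrite /e2 /= ha divr_gt0.
have step : forall u v, Inv u -> e1 u v -> Inv v.
  move=> [a|b] [a'|b'] //= hI he.
  - by exists a => //; apply: edgeXY.
  - case: hI => a0 hc h0.
    have h' := edgeXY _ _ he.
    have [z [z1 z2]] := key _ _ _ h0 h'.
    apply: (connect_trans hc); apply: (connect_trans (y := inr z)).
      by apply: connect1; case/andP: (edgeXZ _ _ z1).
    by apply: connect1; case/andP: (edgeXZ _ _ z2).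
have gen : forall p a, Inv a -> path e1 a p -> Inv (last a p).
  elim=> [|v p IH] a //= hI /andP[he hp].
  exact: IH (step _ _ hI he) hp.
apply/subsetP => a'; rewrite !inE => /connectP[p hp hl].
have := gen p (inl x) (connect0 _ _) hp.
by rewrite -hl.
Qed.
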